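(* No consistently-dimensioned expression fails because of dimension: for every expression $e$ of a static program and every state $\Gamma$, if $\#(e) \sqsubset \top$ then no configuration $\chi$ with $((e, \emptyset)\ |\ \Gamma) \to^{*} \chi$ fails because of dimension.
   Context: Setting: the core language $\epsilon_0$ (expressions: variables, constants, let-blocks binding bundle components, procedure calls, primitive calls, conditionals, bundles of multiple values, fork, join), evaluated from the initial configuration $(e,\emptyset)\ |\ \Gamma$ (main stack holding $e$ with empty local environment, value stack holding one value separator $|$) by a small-step reduction relation $\to$, with $\to^*$ its reflexive-transitive closure. A configuration fails because of dimension when the value stack does not have the shape required by the contractive rule of the holed expression on top of the main stack: e.g. a let receives a bundle with fewer values than bound variables, a procedure/fork/primitive call or bundle receives a wrong number of one-value bundles, or a conditional/join discriminand is not a one-value bundle. Dimensions live in the flat lattice $\mathbb{N}\cup\{\bot,\top\}$ with $\bot\sqsubset\lfloor n\rfloor\sqsubset\top$; $\#(e)$ is a static inference of the bundle size $e$ evaluates to (variables/constants/fork/join $\lfloor1\rfloor$, bundles of $n$ single-valued items $\lfloor n\rfloor$, primitives their out-dimension, procedure calls the procedure's least-fixpoint out-dimension, let the dimension of its body, conditionals the join of branch dimensions, and $\top$ whenever a side condition such as arity or single-valuedness of sub-expressions fails). An expression is consistently-dimensioned if $\#(e)\sqsubset\top$. Programs considered are static (no self-modification of global or procedure definitions). *)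

(* Defs.v *)
From mathcomp Require Import all_boot.
Set Implicit Arguments. Unset Strict Implicit. Unset Printing Implicit Defensive.

Inductive dim := DBot | DFin of nat | DTop.

Definition dle (a b : dim) : bool :=
  match a, b with
  | DBot, _ => true
  | _, DTop => true
  | DFin m, DFin n => m == n
  | _, _ => false
  end.

Definition dlt (a b : dim) : bool := dle a b && ~~ dle b a.

Definition djoin (a b : dim) : dim :=
  match a, b with
  | DBot, x => x
  | x, DBot => x
  | DFin m, DFin n => if m == n then DFin m else DTop
  | _, _ => DTop
  end.

Section Epsilon0.
Variables (V S : Type). (* V: values (constants), S: global states Γ *)

Inductive expr :=
| EVar of nat
| EConst of V
| ELet of seq nat & expr & expr    (* let x1..xn = e1 in e2 *)
| ECall of nat & seq expr
| EPrim of nat & seq expr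
| EIf of expr & expr & expr
| EBundle of seq expr
| EFork of nat & seq expr
| EJoin of expr.

Record lang := Lang {
  truthy : V -> bool;
  prim_in : nat -> nat;
  prim_out : nat -> nat;
  prim_fun : nat -> seq V -> S -> seq V * S;
  prim_fun_size : forall o vs s, size vs = prim_in o ->
                    size (prim_fun o vs s).1 = prim_out o;
  fork_fun : nat -> seq V -> S -> V * S;         (* returns a thread handle *)
  join_fun : V -> S -> option (V * S)            (* None = blocked *)
}.

(* A static program: a fixed table of procedures (parameters, body). *)
Record program := Program {
  plang : lang;
  procs : seq (seq nat * expr)
}.

Definition proc_dflt : seq nat * expr := ([::], EBundle [::]).

Definition arity (P : program) (p : nat) : option nat :=
  if p < size (procs P) then Some (size (nth proc_dflt (procs P) p).1) else None.
Definition params (P : program) (p : nat) : seq nat := (nth proc_dflt (procs P) p).1.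
Definition body (P : program) (p : nat) : expr := (nth proc_dflt (procs P) p).2.

Definition single (D : dim) : bool := dle D (DFin 1).
Definition let_ok (n : nat) (D : dim) : bool :=
  match D with DBot => true | DFin m => n <= m | DTop => false end.

(* #_d(e), relative to an assignment d of out-dimensions to procedures *)
Fixpoint dimof (P : program) (d : nat -> dim) (e : expr) : dim :=
  match e with
  | EVar _ => DFin 1
  | EConst _ => DFin 1
  | ELet xs e1 e2 => if let_ok (size xs) (dimof P d e1) then dimof P d e2 else DTop
  | ECall p es =>
      if (arity P p == Some (size es)) && all single (map (dimof P d) es)
      then d p else DTop
  | EPrim o es =>
      if (prim_in (plang P) o == size es) && all single (map (dimof P d) es)
      then DFin (prim_out (plang P) o) else DTop
  | EIf e0 e1 e2 =>
      if single (dimof P d e0) then djoin (dimof P d e1) (dimof P d e2) else DTop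
  | EBundle es =>
      if all single (map (dimof P d) es) then DFin (size es) else DTop
  | EFork p es =>
      if (arity P p == Some (size es)) && all single (map (dimof P d) es)
      then DFin 1 else DTop
  | EJoin e0 => if single (dimof P d e0) then DFin 1 else DTop
  end.

(* One step of the monotone operator whose least fixpoint gives the
   procedures' out-dimensions. *)
Definition dimF (P : program) (d : nat -> dim) : nat -> dim :=
  fun p => dimof P d (body P p).

(* Least fixpoint by Kleene iteration from ⊥: the lattice is flat, so each
   of the finitely many procedures changes at most twice; 2*#procs + 1
   iterations reach the least fixpoint. *)
Definition outdim (P : program) : nat -> dim :=
  iter (2 * size (procs P)).+1 (dimF P) (fun _ => DBot).

Definition dimE (P : program) (e : expr) : dim := dimof P (outdim P) e.

Definition env := nat -> option V.
Definition env0 : env := fun _ => None.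
Definition upd (r : env) (x : nat) (v : V) : env :=
  fun y => if y == x then Some v else r y.
Fixpoint bind (r : env) (xs : seq nat) (vs : seq V) : env :=
  match xs, vs with
  | x :: xs', v :: vs' => bind (upd r x v) xs' vs'
  | _, _ => r
  end.

Inductive ventry := VSep | VVal of V.

(* holed expressions (pending contractive rules) *)
Inductive hole :=
| HLet of seq nat & expr
| HCall of nat & nat
| HPrim of nat & nat
| HIf of expr & expr
| HBundle of nat
| HFork of nat & nat
| HJoin.

Inductive item :=
| IExp of expr & env
| ISep
| IHole of hole & env.

Record config := Config { cmain : seq item; cvals : seq ventry; cstate : S }.
(* stacks are lists with their top first *)

(* pop the topmost segment (values above the topmost separator), in push order *)
Fixpoint pop_seg (vs : seq ventry) : option (seq V * seq ventry) :=
  match vs with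
  | [::] => None
  | VSep :: r => Some ([::], r)
  | VVal v :: r =>
      match pop_seg r with Some (s, r') => Some (rcons s v, r') | None => None end
  end.

(* pop n segments; the result lists them in push order *)
Fixpoint pop_segs (n : nat) (vs : seq ventry) : option (seq (seq V) * seq ventry) :=
  match n with
  | 0 => Some ([::], vs)
  | n'.+1 =>
      match pop_seg vs with
      | Some (s, r) =>
          match pop_segs n' r with
          | Some (ss, r') => Some (rcons ss s, r')
          | None => None
          end
      | None => None
      end
  end.

Definition pop_singles (n : nat) (vs : seq ventry) : option (seq V * seq ventry) :=
  match pop_segs n vs with
  | Some (ss, r) => if all (fun s => size s == 1) ss then Some (flatten ss, r) else None
  | None => None
  end.

Definition push (ws : seq V) (vs : seq ventry) : seq ventry :=
  rev (map VVal ws) ++ vs.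

Definition args_items (es : seq expr) (r : env) : seq item :=
  flatten [seq [:: ISep; IExp e r] | e <- es].

Inductive step (P : program) : config -> config -> Prop :=
| st_sep m vs s :
    step P (Config (ISep :: m) vs s) (Config m (VSep :: vs) s)
| st_var x r v m vs s : r x = Some v ->
    step P (Config (IExp (EVar x) r :: m) vs s) (Config m (VVal v :: vs) s)
| st_const c r m vs s :
    step P (Config (IExp (EConst c) r :: m) vs s) (Config m (VVal c :: vs) s)
| st_let xs e1 e2 r m vs s :
    step P (Config (IExp (ELet xs e1 e2) r :: m) vs s)
           (Config (ISep :: IExp e1 r :: IHole (HLet xs e2) r :: m) vs s)
| st_call p es r m vs s :
    step P (Config (IExp (ECall p es) r :: m) vs s)
           (Config (args_items es r ++ IHole (HCall p (size es)) r :: m) vs s)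
| st_prim o es r m vs s :
    step P (Config (IExp (EPrim o es) r :: m) vs s)
           (Config (args_items es r ++ IHole (HPrim o (size es)) r :: m) vs s)
| st_if e0 e1 e2 r m vs s :
    step P (Config (IExp (EIf e0 e1 e2) r :: m) vs s)
           (Config (ISep :: IExp e0 r :: IHole (HIf e1 e2) r :: m) vs s)
| st_bundle es r m vs s :
    step P (Config (IExp (EBundle es) r :: m) vs s)
           (Config (args_items es r ++ IHole (HBundle (size es)) r :: m) vs s)
| st_fork p es r m vs s :
    step P (Config (IExp (EFork p es) r :: m) vs s)
           (Config (args_items es r ++ IHole (HFork p (size es)) r :: m) vs s)
| st_join e r m vs s :
    step P (Config (IExp (EJoin e) r :: m) vs s)
           (Config (ISep :: IExp e r :: IHole HJoin r :: m) vs s)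
| st_HLet xs e2 r m vs s b rest :
    pop_segs 1 vs = Some ([:: b], rest) -> size xs <= size b ->
    step P (Config (IHole (HLet xs e2) r :: m) vs s)
           (Config (IExp e2 (bind r xs b) :: m) rest s)
| st_HCall p n r m vs s args rest :
    arity P p = Some n -> pop_singles n vs = Some (args, rest) ->
    step P (Config (IHole (HCall p n) r :: m) vs s)
           (Config (IExp (body P p) (bind env0 (params P p) args) :: m) rest s)
| st_HPrim o n r m vs s args rest :
    prim_in (plang P) o = n -> pop_singles n vs = Some (args, rest) ->
    step P (Config (IHole (HPrim o n) r :: m) vs s)
           (Config m (push (prim_fun (plang P) o args s).1 rest)
                     (prim_fun (plang P) o args s).2)
| st_HIf e1 e2 r m vs s v rest :
    pop_singles 1 vs = Some ([:: v], rest) ->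
    step P (Config (IHole (HIf e1 e2) r :: m) vs s)
           (Config (IExp (if truthy (plang P) v then e1 else e2) r :: m) rest s)
| st_HBundle n r m vs s args rest :
    pop_singles n vs = Some (args, rest) ->
    step P (Config (IHole (HBundle n) r :: m) vs s)
           (Config m (push args rest) s)
| st_HFork p n r m vs s args rest :
    arity P p = Some n -> pop_singles n vs = Some (args, rest) ->
    step P (Config (IHole (HFork p n) r :: m) vs s)
           (Config m (VVal (fork_fun (plang P) p args s).1 :: rest)
                     (fork_fun (plang P) p args s).2)
| st_HJoin r m vs s v rest w s' :
    pop_singles 1 vs = Some ([:: v], rest) -> join_fun (plang P) v s = Some (w, s') ->
    step P (Config (IHole HJoin r :: m) vs s)
           (Config m (VVal w :: rest) s').

Inductive star (R : config -> config -> Prop) : config -> config -> Prop :=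
| star_refl c : star R c c
| star_step c1 c2 c3 : R c1 c2 -> star R c2 c3 -> star R c1 c3.

Definition init (e : expr) (G : S) : config := Config [:: IExp e env0] [:: VSep] G.

Definition shape_ok (P : program) (h : hole) (vs : seq ventry) : bool :=
  match h with
  | HLet xs _ =>
      match pop_segs 1 vs with Some ([:: b], _) => size xs <= size b | _ => false end
  | HCall p n =>
      (if arity P p is Some k then k == n else true) && pop_singles n vs
  | HPrim o n => (prim_in (plang P) o == n) && pop_singles n vs
  | HIf _ _ => pop_singles 1 vs
  | HBundle n => pop_singles n vs
  | HFork p n =>
      (if arity P p is Some k then k == n else true) && pop_singles n vs
  | HJoin => pop_singles 1 vs
  end.

Definition fails_dim (P : program) (c : config) : bool :=
  match cmain c with
  | IHole h _ :: _ => ~~ shape_ok P h (cvals c)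
  | _ => false
  end.

End Epsilon0.

(* Main.v *)
Require Import Defs.
From mathcomp Require Import all_boot.
From Stdlib Require Import Classical.
From mathcomp Require Import zify.
Set Implicit Arguments. Unset Strict Implicit. Unset Printing Implicit Defensive.

Lemma dle_refl a : dle a a.
Proof. by case: a => //= n; rewrite eqxx. Qed.
Lemma dle_top a : dle a DTop.
Proof. by case: a. Qed.
Lemma dle_trans a b c : dle a b -> dle b c -> dle a c.
Proof.
case: a => [|m|] //; case: b => [|n|] //; case: c => [|k|] //=.
by move=> /eqP -> .
Qed.
Lemma dle_cases a b : dle a b -> a = DBot \/ a = b \/ b = DTop.
Proof.
case: a => [|m|]; case: b => [|n|] //=; try by auto.
by move/eqP => ->; auto.
Qed.
Lemma dle_anti a b : dle a b -> dle b a -> a = b.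
Proof.
by case: a => [|m|]; case: b => [|n|] //= /eqP ->.
Qed.
Lemma djoin_ubl a b : dle a (djoin a b).
Proof.
case: a => [|m|]; case: b => [|n|] //=; rewrite ?dle_refl //.
by case: eqP => //= _; rewrite eqxx.
Qed.
Lemma djoin_ubr a b : dle b (djoin a b).
Proof.
case: a => [|m|]; case: b => [|n|] //=; rewrite ?dle_refl //.
by case: eqP => //= ->; rewrite eqxx.
Qed.
Lemma djoin_mono a a' b b' : dle a a' -> dle b b' -> dle (djoin a b) (djoin a' b').
Proof.
move=> /dle_cases [->|[->|->]] Hb.
- exact: dle_trans Hb (djoin_ubr _ _).
- case/dle_cases: Hb => [->|[->|->]].
  + have -> : djoin a' DBot = a' by case: a'.
    exact: djoin_ubl.
  + exact: dle_refl.
  + by case: a' => [|n|] //=; rewrite dle_top.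
- have -> : djoin DTop b' = DTop by case: (b').
  by rewrite dle_top.
Qed.
Lemma single_anti a b : dle a b -> single b -> single a.
Proof. exact: dle_trans. Qed.
Lemma let_ok_anti n a b : dle a b -> let_ok n b -> let_ok n a.
Proof. by case: a => [|m|]; case: b => [|k|] //= /eqP ->. Qed.
Lemma dle_if (c1 c2 : bool) x y : (c2 -> c1) -> dle x y ->
  dle (if c1 then x else DTop) (if c2 then y else DTop).
Proof. by case: c2 => [->|] //; case: c1; rewrite dle_top. Qed.

Section Pf.
Variables (V S : Type).

Definition expr_ind2 (Pr : expr V -> Prop)
 (hvar : forall x, Pr (EVar V x)) (hconst : forall c, Pr (EConst c))
 (hlet : forall xs e1 e2, Pr e1 -> Pr e2 -> Pr (ELet xs e1 e2))
 (hcall : forall p es, List.Forall Pr es -> Pr (ECall p es))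
 (hprim : forall p es, List.Forall Pr es -> Pr (EPrim p es))
 (hif : forall e0 e1 e2, Pr e0 -> Pr e1 -> Pr e2 -> Pr (EIf e0 e1 e2))
 (hbun : forall es, List.Forall Pr es -> Pr (EBundle es))
 (hfork : forall p es, List.Forall Pr es -> Pr (EFork p es))
 (hjoin : forall e, Pr e -> Pr (EJoin e)) : forall e, Pr e :=
 fix F e := 
  let G := fix G (es : seq (expr V)) : List.Forall Pr es :=
     match es with [::] => List.Forall_nil _ | e :: es' => List.Forall_cons _ (F e) (G es') end in
  match e with
  | EVar x => hvar x
  | EConst c => hconst c
  | ELet xs e1 e2 => hlet xs e1 e2 (F e1) (F e2)
  | ECall p es => hcall p es (G es)
  | EPrim p es => hprim p es (G es)
  | EIf e0 e1 e2 => hif e0 e1 e2 (F e0) (F e1) (F e2)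
  | EBundle es => hbun es (G es)
  | EFork p es => hfork p es (G es)
  | EJoin e => hjoin e (F e)
  end.

Variable P : program V S.

Lemma all_single_anti (f1 f2 : expr V -> dim) es :
  List.Forall (fun e => dle (f1 e) (f2 e)) es ->
  all single (map f2 es) -> all single (map f1 es).
Proof.
elim=> //= e es' H _ IH /andP [h1 h2]; apply/andP; split; last exact: IH.
exact: single_anti H h1.
Qed.

Lemma dimof_mono d1 d2 : (forall p, dle (d1 p) (d2 p)) ->
  forall e, dle (dimof P d1 e) (dimof P d2 e).
Proof.
move=> H; elim/expr_ind2 => /=.
- by [].
- by [].
- move=> xs e1 e2 H1 H2; apply: dle_if H2; exact: let_ok_anti.
- move=> p es /all_single_anti Hf; apply: dle_if (H p).
  by case/andP => -> /Hf.
- move=> p es /all_single_anti Hf; apply: dle_if (dle_refl _).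
  by case/andP => -> /Hf.
- move=> e0 e1 e2 H0 H1 H2; apply: dle_if (djoin_mono H1 H2); exact: single_anti.
- move=> es /all_single_anti Hf; apply: dle_if (dle_refl _) => //.
- move=> p es /all_single_anti Hf; apply: dle_if (dle_refl _).
  by case/andP => -> /Hf.
- move=> e0 H0; apply: dle_if (dle_refl _); exact: single_anti.
Qed.

Definition dk k := iter k (dimF P) (fun _ => DBot).
Local Notation n := (size (procs P)).

Lemma dk_chain k p : dle (dk k p) (dk k.+1 p).
Proof.
elim: k p => [|k IH] p //.
rewrite /dk !iterS; exact: dimof_mono.
Qed.

Lemma dk_out k p : n <= p -> dk k.+1 p = DFin 0.
Proof.
move=> hp; rewrite /dk iterS /dimF /body nth_default //.
Qed.

Definition rank (a : dim) := match a with DBot => 0 | DFin _ => 1 | DTop => 2 end.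
Lemma rank_le a b : dle a b -> rank a <= rank b.
Proof. by case/dle_cases => [->|[->|->]] //; case: a. Qed.
Lemma rank_lt a b : dle a b -> a <> b -> rank a < rank b.
Proof. by case: a => [|m|]; case: b => [|k|] //= /eqP ->. Qed.

Fixpoint hs (d : nat -> dim) k := match k with 0 => 0 | k'.+1 => rank (d k') + hs d k' end.
Lemma hs_le d k : hs d k <= 2 * k.
Proof. elim: k => //= k IH; have : rank (d k) <= 2 by case: (d k). lia. Qed.
Lemma hs_mono d d' k : (forall i, rank (d i) <= rank (d' i)) -> hs d k <= hs d' k.
Proof. move=> H; elim: k => //= k IH; have := H k; lia. Qed.
Lemma hs_strict d d' k i0 : (forall i, rank (d i) <= rank (d' i)) -> i0 < k ->
  rank (d i0) < rank (d' i0) -> hs d k < hs d' k.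
Proof.
move=> H; elim: k => //= k IH hi hr.
have := H k; have := hs_mono k H.
case: (ltnP i0 k) => [lt|ge].
  have := IH lt hr; lia.
have e : i0 = k by lia.
subst i0; lia.
Qed.

Definition stable k := forall p, dk k p = dk k.+1 p.

Lemma stable_next k : stable k -> stable k.+1.
Proof.
move=> H p; rewrite /dk iterS [in RHS]iterS; apply: dle_anti; apply: dimof_mono => q;
  have := H q; rewrite /dk => ->; exact: dle_refl.
Qed.

Lemma step_or k : stable k.+1 \/ hs (dk k.+1) n < hs (dk k.+2) n.
Proof.
case: (classic (stable k.+1)) => [|ns]; first by left.
right; case: (not_all_ex_not _ _ ns) => p hp.
have hpn : p < n.
  by case: (ltnP p n) => // hle; case: hp; rewrite !dk_out.
apply: (hs_strict (i0 := p)) => //.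
- move=> i; apply: rank_le; exact: dk_chain.
- apply: rank_lt => //; exact: dk_chain.
Qed.

Lemma claim j : stable j.+1 \/ j < hs (dk j.+2) n.
Proof.
elim: j => [|j IH].
  by case: (step_or 0) => [h|h]; [left|right; lia].
case: IH => [h|h]; first by left; apply: stable_next.
by case: (step_or j.+1) => [h'|h']; [left|right; lia].
Qed.

Lemma outdim_fix p : dimof P (outdim P) (body P p) = outdim P p.
Proof.
have st : stable (2 * n).+1.
  case: (claim (2 * n)) => // h; have := hs_le (dk (2 * n).+2) n; lia.
have := st p; rewrite /dk /outdim [in X in _ = X -> _]iterS => ->; done.
Qed.


Definition inc (k : nat) (l : seq nat) :=
  match l with a :: t => (a + k) :: t | [::] => [:: k] end.
Fixpoint abs (vs : seq (ventry V)) : seq nat :=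
  match vs with [::] => [:: 0] | VSep :: r => 0 :: abs r | VVal _ :: r => inc 1 (abs r) end.
Fixpoint popones (k : nat) (l : seq nat) : option (seq nat) :=
  match k with
  | 0 => Some l
  | k'.+1 => match l with
             | a :: t => if (a == 1) && (t != [::]) then popones k' t else None
             | [::] => None end
  end.
Definition cont (D : dim) (k : seq nat -> Prop) l :=
  match D with DTop => False | DBot => True | DFin j => k (inc j l) end.

Fixpoint ok (m : seq (item V)) (l : seq nat) : Prop :=
 match m with
 | [::] => True
 | ISep :: m' => ok m' (0 :: l)
 | IExp e _ :: m' => cont (dimof P (outdim P) e) (ok m') l
 | IHole h _ :: m' =>
   match h with
   | HLet xs e2 => match l with
                   | a :: t => size xs <= a /\ t <> [::] /\ cont (dimof P (outdim P) e2) (ok m') t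
                   | [::] => False end
   | HCall p k => arity P p = Some k /\
        exists2 rest, popones k l = Some rest & cont (outdim P p) (ok m') rest
   | HPrim o k => prim_in (plang P) o = k /\
        exists2 rest, popones k l = Some rest & ok m' (inc (prim_out (plang P) o) rest)
   | HIf e1 e2 => exists2 rest, popones 1 l = Some rest &
        cont (dimof P (outdim P) e1) (ok m') rest /\ cont (dimof P (outdim P) e2) (ok m') rest
   | HBundle k => exists2 rest, popones k l = Some rest & ok m' (inc k rest)
   | HFork p k => arity P p = Some k /\
        exists2 rest, popones k l = Some rest & ok m' (inc 1 rest)
   | HJoin => exists2 rest, popones 1 l = Some rest & ok m' (inc 1 rest)
   end
 end.

Lemma inc_nn k l : inc k l <> [::].
Proof. by case: l. Qed.
Lemma abs_nn vs : abs vs <> [::].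
Proof. by case: vs => [|[|v] r] //=; apply: inc_nn. Qed.
Lemma inc_inc a b l : inc a (inc b l) = inc (b + a) l.
Proof. by case: l => [|x t] //=; rewrite addnA. Qed.
Lemma inc0 l : l <> [::] -> inc 0 l = l.
Proof. by case: l => [|x t] //= _; rewrite addn0. Qed.

Lemma pop_seg_abs vs s r : pop_seg vs = Some (s, r) -> abs vs = size s :: abs r.
Proof.
elim: vs s r => [|[|v] vs IH] s r //=.
- by case=> <- <-.
- case E: (pop_seg vs) => [[s' r']|] // [<- <-].
  by rewrite (IH _ _ E) /= size_rcons addn1.
Qed.

Lemma pop_seg_ex vs a t : abs vs = a :: t -> t <> [::] ->
  exists s r, pop_seg vs = Some (s, r).
Proof.
elim: vs a t => [|[|v] vs IH] a t /=.
- by case=> _ <-.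
- by move=> _ _; exists [::], vs.
- case E: (abs vs) => [|a' t'] /= [_ <-] ht //.
  case: (IH _ _ E ht) => s [r ->]; by exists (rcons s v), r.
Qed.

Lemma pop_segs_popones k vs ss r : pop_segs k vs = Some (ss, r) ->
  all (fun s => size s == 1) ss -> popones k (abs vs) = Some (abs r) /\ size ss = k.
Proof.
elim: k vs ss r => [|k IH] vs ss r /=; first by case=> <- <-.
case E: (pop_seg vs) => [[s r1]|] //.
case E2: (pop_segs k r1) => [[ss' r']|] // [<- <-].
rewrite all_rcons => /andP [/eqP hs hall].
rewrite (pop_seg_abs E) hs /=.
have hn : abs r1 != [::] by apply/eqP; apply: abs_nn.
rewrite hn size_rcons; case: (IH _ _ _ E2 hall) => -> ->.
by [].
Qed.

Lemma size_flatten1 (ss : seq (seq V)) : all (fun s => size s == 1) ss -> size (flatten ss) = size ss.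
Proof. by elim: ss => //= s ss IH /andP [/eqP hs /IH]; rewrite size_cat hs => ->. Qed.

Lemma pop_singles_popones k vs args r : pop_singles k vs = Some (args, r) ->
  popones k (abs vs) = Some (abs r) /\ size args = k.
Proof.
rewrite /pop_singles; case E: (pop_segs k vs) => [[ss r']|] //.
case: ifP => // hall [<- <-].
case: (pop_segs_popones E hall) => -> hs; split => //.
by rewrite size_flatten1.
Qed.

Lemma popones_pop_segs k vs rest : popones k (abs vs) = Some rest ->
  exists ss r, pop_segs k vs = Some (ss, r) /\ all (fun s => size s == 1) ss.
Proof.
elim: k vs rest => [|k IH] vs rest /=; first by move=> _; exists [::], vs.
case E: (abs vs) => [|a t] //.
case: ifP => // /andP [/eqP ha /eqP ht] hp.
case: (pop_seg_ex E ht) => s [r hs].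
move: E; rewrite (pop_seg_abs hs) => -[hsz ht'].
rewrite -ht' in hp; case: (IH _ _ hp) => ss [r' [h1 h2]].
exists (rcons ss s), r'; rewrite hs h1; split => //.
by rewrite all_rcons h2 hsz ha.
Qed.

Lemma popones_pop_singles k vs rest : popones k (abs vs) = Some rest ->
  exists args r, pop_singles k vs = Some (args, r).
Proof.
move/popones_pop_segs => [ss [r [h1 h2]]].
by rewrite /pop_singles h1 h2; exists (flatten ss), r.
Qed.

Lemma abs_push ws vs : abs (push ws vs) = inc (size ws) (abs vs).
Proof.
rewrite /push; elim: ws vs => [|w ws IH] vs /=.
  by rewrite inc0 //; apply: abs_nn.
by rewrite rev_cons cat_rcons IH /= inc_inc add1n.
Qed.

Lemma popones_nseq k l : l <> [::] -> popones k (nseq k 1 ++ l) = Some l.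
Proof.
move=> hl; elim: k => [|k IH] //=.
have -> : (nseq k 1 ++ l != [::]) by case: k {IH} => //=; case: l hl.
by rewrite IH.
Qed.

Lemma nseq_cons1 k l : nseq k 1 ++ 1 :: l = 1 :: nseq k 1 ++ l.
Proof. by elim: k => //= k ->. Qed.

Lemma cont_le D1 D k l : dle D1 D -> cont D k l -> cont D1 k l.
Proof. by case/dle_cases => [->|[->|->]]. Qed.

Lemma single_cases D : single D -> D = DBot \/ D = DFin 1.
Proof. by case: D => [|m|] //= => [_|/eqP ->]; auto. Qed.

Lemma args_ok es r m2 l : all single (map (dimof P (outdim P)) es) ->
  ok m2 (nseq (size es) 1 ++ l) -> ok (args_items es r ++ m2) l.
Proof.
elim: es l => [|e es IH] l //= /andP [hs hall] H.
case/single_cases: hs => -> //=; rewrite ?add0n.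
apply: IH => //; by rewrite nseq_cons1.
Qed.

Lemma ok_step c c' : step P c c' -> ok (cmain c) (abs (cvals c)) -> ok (cmain c') (abs (cvals c')).
Proof.
case=> /=.
- by [].
- by [].
- by [].
- move=> xs e1 e2 r m vs s.
  case: (dimof P (outdim P) e1) => [|j|] //= H; rewrite ?add0n /=.
  case: ifP H => //= hl H; split => //; split => //; exact: abs_nn.
- move=> p es r m vs s.
  case: ifP => // /andP [/eqP ha hall] H; apply: args_ok => //=.
  split => //; exists (abs vs) => //; apply: popones_nseq; exact: abs_nn.
- move=> o es r m vs s.
  case: ifP => // /andP [/eqP ha hall] H; apply: args_ok => //=.
  split => //; exists (abs vs) => //; apply: popones_nseq; exact: abs_nn.
- move=> e0 e1 e2 r m vs s.
  case: ifP => // hs H; case/single_cases: hs => -> //=; rewrite ?add0n.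
  have -> : abs vs != [::] by apply/eqP; apply: abs_nn.
  exists (abs vs) => //; split; apply: cont_le H.
  + exact: djoin_ubl.
  + exact: djoin_ubr.
- move=> es r m vs s.
  case: ifP => // hall H; apply: args_ok => //=.
  exists (abs vs) => //; apply: popones_nseq; exact: abs_nn.
- move=> p es r m vs s.
  case: ifP => // /andP [/eqP ha hall] H; apply: args_ok => //=.
  split => //; exists (abs vs) => //; apply: popones_nseq; exact: abs_nn.
- move=> e r m vs s.
  case: ifP => // hs H; case/single_cases: hs => -> //=; rewrite ?add0n.
  have -> : abs vs != [::] by apply/eqP; apply: abs_nn.
  by exists (abs vs).
- move=> xs e2 r m vs s b rest /=.
  case E: (pop_seg vs) => [[s' r']|] // [] _ <- hs.
  by rewrite (pop_seg_abs E) /= => -[_ [_ H]].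
- move=> p k r m vs s args rest ha hp [_ [rest0 h0 H]].
  case: (pop_singles_popones hp) => h1 _; have [E0] := etrans (esym h0) h1; subst rest0.
  apply: cont_le H; rewrite outdim_fix; exact: dle_refl.
- move=> o k r m vs s args rest hk hp [_ [rest0 h0 H]].
  case: (pop_singles_popones hp) => h1 hsz; have [E0] := etrans (esym h0) h1; subst rest0.
  rewrite abs_push prim_fun_size //; by rewrite hsz hk.
- move=> e1 e2 r m vs s v rest hp [rest0 h0 [H1 H2]].
  case: (pop_singles_popones hp) => h1 _; have [E0] := etrans (esym h0) h1; subst rest0.
  by case: (truthy _ v).
- move=> k r m vs s args rest hp [rest0 h0 H].
  case: (pop_singles_popones hp) => h1 hsz; have [E0] := etrans (esym h0) h1; subst rest0.
  by rewrite abs_push hsz.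
- move=> p k r m vs s args rest ha hp [_ [rest0 h0 H]].
  by case: (pop_singles_popones hp) => h1 _; have [E0] := etrans (esym h0) h1; subst rest0.
- move=> r m vs s v rest w s' hp hj [rest0 h0 H].
  by case: (pop_singles_popones hp) => h1 _; have [E0] := etrans (esym h0) h1; subst rest0.
Qed.

Lemma ok_shape h r m vs : ok (IHole h r :: m) (abs vs) -> shape_ok P h vs.
Proof.
case: h => /=.
- move=> xs e2; case E: (abs vs) => [|a t] // [hx [ht _]].
  case: (pop_seg_ex E ht) => s [r' hs].
  move: E; rewrite (pop_seg_abs hs) => -[ha _].
  by rewrite hs /= ha.
- move=> p k [-> [rest h _]]; rewrite eqxx /=.
  by case: (popones_pop_singles h) => args [r' ->].
- move=> o k [-> [rest h _]]; rewrite eqxx /=.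
  by case: (popones_pop_singles h) => args [r' ->].
- move=> e1 e2 [rest h _].
  by case: (@popones_pop_singles 1 vs rest h) => args [r' ->].
- move=> k [rest h _].
  by case: (popones_pop_singles h) => args [r' ->].
- move=> p k [-> [rest h _]]; rewrite eqxx /=.
  by case: (popones_pop_singles h) => args [r' ->].
- move=> [rest h _].
  by case: (@popones_pop_singles 1 vs rest h) => args [r' ->].
Qed.

Lemma star_ok c c' : star (step P) c c' -> ok (cmain c) (abs (cvals c)) -> ok (cmain c') (abs (cvals c')).
Proof. elim=> // c1 c2 c3 hs _ IH H; apply: IH; exact: ok_step hs H. Qed.

End Pf.

Theorem mainTheorem8 (V S : Type) (P : program V S) (e : expr V) (G : S)
    (chi : config V S) :
  dlt (dimE P e) DTop ->
  star (step P) (init e G) chi ->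
  ~~ fails_dim P chi.
Proof.
move=> hd /star_ok H.
have : ok P (cmain chi) (abs (cvals chi)).
  apply: H => /=; rewrite /dimE in hd.
  by case: (dimof P (outdim P) e) hd.
clear H; case: chi => [m vs s] /=; rewrite /fails_dim /=.
case: m => [|[e' r| |h r] m'] //= Hok.
by rewrite negbK; exact: ok_shape Hok.
Qed.
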